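(* Let $\Gamma$ be a group with $\operatorname{H}^1_b(\Gamma;\mathbb{R}) \cong 0$ and $\operatorname{H}^2_b(\Gamma;\mathbb{R}) \cong 0$. Then the second vanishing modulus of $\Gamma$ equals $1$.
   Context: $\operatorname{C}^n_b(\Gamma;\mathbb{R}) = \ell^\infty(\Gamma^{n+1})^\Gamma$ (bounded real functions invariant under the diagonal action) with supremum norm $|\cdot|_\infty$ and homogeneous coboundary $\delta^n_b$; $\operatorname{H}^*_b(\Gamma;\mathbb{R})$ is its cohomology. If $\operatorname{H}^n_b(\Gamma;\mathbb{R})\cong 0$, the $n$-th vanishing modulus of $\Gamma$ is the minimal $K \in \mathbb{R}_{\geq 0}\cup\{\infty\}$ such that for every $c \in \ker \delta^n_b$ there is $b \in \operatorname{C}^{n-1}_b(\Gamma;\mathbb{R})$ with $\delta^{n-1}_b(b) = c$ and $|b|_\infty \leq K|c|_\infty$. *)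

(* Defs.v *)
From HB Require Import structures.
From mathcomp Require Import all_boot all_order all_algebra.
From mathcomp Require Import all_classical all_reals.
From mathcomp Require Import Rstruct.
Set Implicit Arguments. Unset Strict Implicit. Unset Printing Implicit Defensive.
Import Order.TTheory GRing.Theory Num.Theory.
Local Open Scope ring_scope.
Local Open Scope classical_set_scope.

Record group := Group {
  gcarrier :> Type;
  gmul : gcarrier -> gcarrier -> gcarrier;
  gone : gcarrier;
  ginv : gcarrier -> gcarrier;
  gmulA : forall x y z, gmul x (gmul y z) = gmul (gmul x y) z;
  gmul1 : forall x, gmul gone x = x;
  gmulV : forall x, gmul (ginv x) x = gone }.

Notation RR := Rdefinitions.R.

(* Homogeneous n-cochains: real functions on Gamma^(n+1). *)
Definition cochain (G : group) (n : nat) := ('I_n.+1 -> G) -> RR.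

Definition bounded_cochain (G : group) n (f : cochain G n) : Prop :=
  exists M : RR, forall x, `|f x| <= M.

Definition invariant_cochain (G : group) n (f : cochain G n) : Prop :=
  forall (g : G) (x : 'I_n.+1 -> G), f (fun j => gmul g (x j)) = f x.

Definition Cb (G : group) n (f : cochain G n) : Prop :=
  bounded_cochain f /\ invariant_cochain f.

Definition coboundary (G : group) n (f : cochain G n) : cochain G n.+1 :=
  fun x => \sum_(i < n.+2) (-1) ^+ i * f (fun j => x (lift i j)).

Definition supnorm (G : group) n (f : cochain G n) : RR :=
  sup [set `|f x| | x in [set: 'I_n.+1 -> G]].

(* H^(n+1)_b(Gamma; R) = 0 : every bounded (n+1)-cocycle is the coboundary
   of a bounded invariant n-cochain. *)
Definition Hb_vanishes (G : group) (n : nat) : Prop :=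
  forall c : cochain G n.+1, Cb c -> coboundary c = (fun _ => 0) ->
    exists b : cochain G n, Cb b /\ coboundary b = c.

(* K (in [0, +oo]) is an admissible constant in degree n+1. *)
Definition vanishing_constant (G : group) (n : nat) (K : \bar RR) : Prop :=
  (0 <= K)%E /\
  forall c : cochain G n.+1, Cb c -> coboundary c = (fun _ => 0) ->
    exists b : cochain G n, Cb b /\ coboundary b = c /\
      ((supnorm b)%:E <= K * (supnorm c)%:E)%E.

(* The (n+1)-th vanishing modulus equals K: K is the minimal admissible
   constant. *)
Definition vanishing_modulus_is (G : group) (n : nat) (K : \bar RR) : Prop :=
  vanishing_constant G n K /\
  forall K', vanishing_constant G n K' -> (K <= K')%E.

(* Main.v *)
Require Import Defs.
From mathcomp Require Import all_boot all_order all_algebra.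
From mathcomp Require Import all_classical all_reals.
From mathcomp Require Import Rstruct.
From mathcomp Require Import ring lra.
Set Implicit Arguments. Unset Strict Implicit. Unset Printing Implicit Defensive.
Import Order.TTheory GRing.Theory Num.Theory.
Local Open Scope ring_scope.
Local Open Scope classical_set_scope.

Section Aux.
Variable G : group.

Lemma gmulVr (x : G) : gmul x (ginv x) = gone G.
Proof.
rewrite -{1}(gmul1 (gmul x (ginv x))) -{1}(gmulV (ginv x)).
by rewrite -gmulA (gmulA (ginv x)) gmulV gmul1 gmulV.
Qed.

Lemma gmul1r (x : G) : gmul x (gone G) = x.
Proof. by rewrite -(gmulV x) gmulA gmulVr gmul1. Qed.

Definition pair2 (u v : G) : 'I_2 -> G := fun j => if val j == 0%N then u else v.
Definition triple3 (u v w : G) : 'I_3 -> G :=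
  fun j => if val j == 0%N then u else if val j == 1%N then v else w.

Lemma pair2E (x : 'I_2 -> G) : x = pair2 (x ord0) (x ord_max).
Proof.
apply: funext => -[[|[|//]] Hj] /=; rewrite /pair2 /=; congr x; exact: val_inj.
Qed.

Lemma cob1 (b : cochain G 1) u v w :
  coboundary b (triple3 u v w) = b (pair2 v w) - b (pair2 u w) + b (pair2 u v).
Proof.
rewrite /coboundary !big_ord_recl big_ord0 /= addr0.
rewrite expr0 expr1 mul1r mulN1r.
have -> : (fun j : 'I_2 => triple3 u v w (lift ord0 j)) = pair2 v w.
  by apply: funext => -[[|[|//]] Hj].
have -> : (fun j : 'I_2 => triple3 u v w (lift (lift ord0 ord0) j)) = pair2 u w.
  by apply: funext => -[[|[|//]] Hj].
have -> : (fun j : 'I_2 => triple3 u v w (lift (lift ord0 (lift ord0 ord0)) j)) = pair2 u v.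
  by apply: funext => -[[|[|//]] Hj].
by rewrite /bump /= expr2 mulN1r opprK mul1r addrA.
Qed.


Lemma archi0 (e M : RR) : (forall n : nat, n%:R * e <= M) -> e <= 0.
Proof.
move=> h; rewrite leNgt; apply/negP => he.
have M0 : 0 <= M by have := h 0%N; rewrite mul0r.
have := @Num.Theory.archi_boundP _ (M / e) (divr_ge0 M0 (ltW he)).
rewrite ltr_pdivrMr //; move: (h (Num.bound (M / e))); lra.
Qed.

Lemma key (b : cochain G 1) (C : RR) : bounded_cochain b -> invariant_cochain b ->
  (forall y, `|coboundary b y| <= C) -> forall x, `|b x| <= C.
Proof.
move=> [M hM] hinv hc x; rewrite (pair2E x).
set x0 := x ord0; set x1 := x ord_max.
set a := b (pair2 x0 x1).
pose g := gmul x1 (ginv x0).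
pose y k := iter k (gmul g) x0.
have y1 : y 1%N = x1 by rewrite /y /= /g -gmulA gmulV gmul1r.
have ha : forall k, b (pair2 (y k) (y k.+1)) = a.
  elim => [|k IH]; first by rewrite /a -y1.
  have -> : pair2 (y k.+1) (y k.+2) = (fun j => gmul g (pair2 (y k) (y k.+1) j)).
    by apply: funext => j; rewrite /pair2; case: ifP.
  by rewrite hinv.
have hs : forall k, b (pair2 x0 (y k.+1)) =
    b (pair2 x0 (y k)) + a - coboundary b (triple3 x0 (y k) (y k.+1)).
  by move=> k; rewrite cob1 ha; ring.
have lo : forall n : nat, b (pair2 x0 x0) + n%:R * (a - C) <= b (pair2 x0 (y n)).
  elim => [|n IH]; first by rewrite mul0r addr0.
  rewrite hs -natr1; have := hc (triple3 x0 (y n) (y n.+1)); rewrite ler_norml.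
  move: IH; lra.
have hi : forall n : nat, b (pair2 x0 (y n)) <= b (pair2 x0 x0) + n%:R * (a + C).
  elim => [|n IH]; first by rewrite mul0r addr0.
  rewrite hs -natr1; have := hc (triple3 x0 (y n) (y n.+1)); rewrite ler_norml.
  move: IH; lra.
have h1 : a - C <= 0.
  apply: (@archi0 _ (M + M)) => n.
  have := hM (pair2 x0 (y n)); have := hM (pair2 x0 x0); rewrite !ler_norml.
  move: (lo n); lra.
have h2 : - a - C <= 0.
  apply: (@archi0 _ (M + M)) => n.
  have := hM (pair2 x0 (y n)); have := hM (pair2 x0 x0); rewrite !ler_norml.
  move: (hi n); lra.
rewrite ler_norml; lra.
Qed.

End Aux.

Lemma supnorm_ge (G : group) n (f : cochain G n) :
  bounded_cochain f -> forall x, `|f x| <= supnorm f.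
Proof.
move=> [M hM] x; apply: ub_le_sup; last by exists x.
by exists M => _ [y _ <-].
Qed.

Lemma supnorm_le (G : group) n (f : cochain G n) C :
  (forall x, `|f x| <= C) -> supnorm f <= C.
Proof.
move=> h; apply: ge_sup; first by exists `|f (fun _ => gone G)|, (fun _ => gone G).
by move=> _ [y _ <-].
Qed.

Theorem proposition4p15 (G : group) :
  Hb_vanishes G 0 -> Hb_vanishes G 1 -> vanishing_modulus_is G 1 (1%R : RR)%:E.
Proof.
move=> _ H2; split.
  split; first by rewrite lee_fin.
  move=> c [cb ci] cc; have [b [[bb bi] hb]] := H2 c (conj cb ci) cc.
  exists b; split; first by split.
  split => //; rewrite mul1e lee_fin; apply: supnorm_le => x.
  apply: key => // y; rewrite hb; exact: supnorm_ge.
move=> K' [K0 hK].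
pose c : cochain G 2 := fun _ => 1.
have Cc : Cb c.
  by split => //; exists 1 => x; rewrite /c normr1.
have cc : coboundary c = (fun _ => 0).
  apply: funext => x; rewrite /coboundary /c !big_ord_recl big_ord0 /=.
  by rewrite /bump /=; ring.
have [b [[bb _] [hb hle]]] := hK c Cc cc.
have sc : supnorm c = 1.
  apply/le_anti/andP; split; first by apply: supnorm_le => x; rewrite normr1.
  by have := supnorm_ge (proj1 Cc) (fun _ => gone G); rewrite normr1.
rewrite sc mule1 in hle.
have b1 : b (fun _ => gone G) = 1.
  have := congr1 (fun f => f (fun _ => gone G)) hb.
  rewrite /coboundary /c !big_ord_recl big_ord0 /= /bump /= => <-; ring.
apply: le_trans hle; rewrite lee_fin -b1.
exact: le_trans (ler_norm _) (supnorm_ge bb _).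
Qed.
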